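(* Let $|\psi\rangle,|\phi\rangle,|e\rangle,|f\rangle$ be unit vectors in $\mathbb{C}^2$ and let $\mathcal{GE}$ be the set of entanglement breaking channels on $\mathcal{L}(\mathbb{C}^2)$. Then $$\max_{\Psi\in\mathcal{GE}}\left\{\frac12\langle e|\Psi(|\psi\rangle\langle\psi|)|e\rangle+\frac12\langle f|\Psi(|\phi\rangle\langle\phi|)|f\rangle\right\}\le\frac12\left(1+\sqrt{|\langle e|f\rangle|^2+\max\left\{|\langle\psi|\phi\rangle||\langle e|f\rangle|,\sqrt{(1-|\langle\psi|\phi\rangle|^2)(1-|\langle e|f\rangle|^2)}\right\}^2}\right).$$
   Context: A quantum channel (linear, completely positive, trace preserving map on $\mathcal{L}(\mathbb{C}^2)$) $\Psi$ is entanglement breaking if $(\mathrm{id}\otimes\Psi)(\rho)$ is separable for every density operator $\rho$ on $\mathbb{C}^2\otimes\mathbb{C}^2$. *)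

(* Defs.v *)
(* Complex numbers are modelled as R[i] (mathcomp-real-closed
   `complex`) over an arbitrary R : realType (complete archimedean ordered
   field, i.e. the reals), so R[i] is the field of complex numbers. *)
From HB Require Import structures.
From mathcomp Require Import all_boot all_order all_algebra.
From mathcomp Require Import reals.
From mathcomp Require Import complex mxtens.
Set Implicit Arguments. Unset Strict Implicit. Unset Printing Implicit Defensive.
Import Order.TTheory GRing.Theory Num.Theory.
Local Open Scope ring_scope.

Section QDefs.
Variable C : numClosedFieldType.

Definition adjmx m n (A : 'M[C]_(m, n)) : 'M[C]_(n, m) := (map_mx Num.conj A)^T.

Definition braket n (u v : 'cV[C]_n) : C := (adjmx u *m v) 0 0.

Definition expect n (u : 'cV[C]_n) (A : 'M[C]_n) : C := (adjmx u *m A *m u) 0 0.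

Definition ketbra n (u : 'cV[C]_n) : 'M[C]_n := u *m adjmx u.

Definition unit_vec n (u : 'cV[C]_n) : Prop := braket u u = 1.

Definition psd n (A : 'M[C]_n) : Prop := forall v : 'cV[C]_n, 0 <= expect v A.

Definition density n (A : 'M[C]_n) : Prop := psd A /\ \tr A = 1.

(* (id_n (x) Psi) applied to X : L(C^n (x) C^2), with the Kronecker ordering
   of mxtens (first factor = outer index). *)
Definition block n (X : 'M[C]_(n * 2)) (a a' : 'I_n) : 'M[C]_2 :=
  \matrix_(b, b') X (mxtens_index (a, b)) (mxtens_index (a', b')).

Definition id_tens n (Psi : 'M[C]_2 -> 'M[C]_2) (X : 'M[C]_(n * 2))
  : 'M[C]_(n * 2) :=
  \matrix_(i, j)
    Psi (block X (mxtens_unindex i).1 (mxtens_unindex j).1)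
        (mxtens_unindex i).2 (mxtens_unindex j).2.

Definition is_linear_map m (Psi : 'M[C]_m -> 'M[C]_m) : Prop :=
  forall (a : C) (A B : 'M[C]_m), Psi (a *: A + B) = a *: Psi A + Psi B.

Definition completely_positive (Psi : 'M[C]_2 -> 'M[C]_2) : Prop :=
  forall n (X : 'M[C]_(n * 2)), psd X -> psd (id_tens Psi X).

Definition trace_preserving (Psi : 'M[C]_2 -> 'M[C]_2) : Prop :=
  forall A : 'M[C]_2, \tr (Psi A) = \tr A.

Definition quantum_channel (Psi : 'M[C]_2 -> 'M[C]_2) : Prop :=
  [/\ is_linear_map Psi, completely_positive Psi & trace_preserving Psi].

(* separable states on C^2 (x) C^2: finite convex combinations of product
   states (finite suffices by Caratheodory in finite dimension) *)
Definition separable (rho : 'M[C]_(2 * 2)) : Prop :=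
  exists N (p : 'I_N -> C) (A B : 'I_N -> 'M[C]_2),
    [/\ forall k, 0 <= p k, \sum_k p k = 1,
        forall k, density (A k), forall k, density (B k)
      & rho = \sum_k p k *: (A k *t B k)].

Definition entanglement_breaking (Psi : 'M[C]_2 -> 'M[C]_2) : Prop :=
  quantum_channel Psi /\
  forall rho : 'M[C]_(2 * 2), density rho -> separable (id_tens Psi rho).

End QDefs.

(* Main.v *)
Require Import Defs.
From HB Require Import structures.
From mathcomp Require Import all_boot all_order all_algebra.
From mathcomp Require Import reals.
From mathcomp Require Import complex mxtens.
From mathcomp Require Import ring lra.
Import Order.TTheory GRing.Theory Num.Theory.
Local Open Scope ring_scope.
Notation cRe := complex.Re.
Notation cIm := complex.Im.

Section RealPart.
Variable R : realType.
Implicit Types x y : R.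

Lemma le_sqrt_sq x y : x <= Num.sqrt y -> x <= 0 \/ x ^+ 2 <= y.
Proof.
move=> h; have [x0|x0] := lerP x 0; [by left|right].
have y0 : 0 <= y.
  by case: (lerP 0 y) => // /ltr0_sqrtr hy; move: h; rewrite hy; lra.
rewrite -(sqr_sqrtr y0); rewrite ler_sqr //; last exact: sqrtr_ge0.
exact: ltW.
Qed.

Lemma sq_le_sqrt x y : x ^+ 2 <= y -> x <= Num.sqrt y.
Proof.
move=> h; have [x0|x0] := lerP x 0.
  by apply: le_trans x0 (sqrtr_ge0 _).
by rewrite -(ger0_norm (ltW x0)) -sqrtr_sqr ler_sqrt // (le_trans _ h) ?sqr_ge0.
Qed.

Lemma perk (s c K T M N b b' : R) :
  (forall al be, al * (M + N - 1) + be * (M - N) <=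
                  Num.sqrt (al ^+ 2 * s ^+ 2 + be ^+ 2 * (1 - s ^+ 2))) ->
  (forall al be, al * (b + b' - 1) + be * (b - b') <=
                  Num.sqrt (al ^+ 2 * c ^+ 2 + be ^+ 2 * (1 - c ^+ 2))) ->
  s ^+ 2 <= 1 -> c ^+ 2 <= 1 -> 
  c ^+ 2 * s ^+ 2 <= K ^+ 2 -> (1 - s ^+ 2) * (1 - c ^+ 2) <= K ^+ 2 ->
  0 < T -> c ^+ 2 + K ^+ 2 <= T ^+ 2 ->
  T * (2 * (M * b + N * b') - (M + N)) <= T ^+ 2 + c ^+ 2 * (M + N - 1).
Proof.
move=> SA SB hs hc hK1 hK2 hT0 hT.
set z := M + N - 1; set d := M - N.
have hz1 : z ^+ 2 <= 1.
  have := SA 1 0; have := SA (-1) 0.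
  rewrite !expr0n /= !mul0r !addr0 !expr1n !mul1r !mulN1r.
  case/le_sqrt_sq => h1; case/le_sqrt_sq => h2; rewrite -/z in h1 h2; nra.
set Y := c ^+ 2 * z ^+ 2 + (1 - c ^+ 2) * d ^+ 2.
have hY0 : 0 <= Y by rewrite /Y; nra.
have hY : Y <= K ^+ 2.
  have := SA (c ^+ 2 * z) ((1 - c ^+ 2) * d).
  have -> : c ^+ 2 * z * z + (1 - c ^+ 2) * d * d = Y by rewrite /Y; ring.
  case/le_sqrt_sq => h.
    have -> : Y = 0 by apply/eqP; rewrite eq_le h hY0.
    exact: sqr_ge0.
  have hW : (c ^+ 2 * z) ^+ 2 * s ^+ 2 + ((1 - c ^+ 2) * d) ^+ 2 * (1 - s ^+ 2)
            <= K ^+ 2 * Y.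
    have e1 : c ^+ 2 * s ^+ 2 * (c ^+ 2 * z ^+ 2) <= K ^+ 2 * (c ^+ 2 * z ^+ 2).
      by apply: ler_wpM2r => //; apply: mulr_ge0; apply: sqr_ge0.
    have e2 : (1 - s ^+ 2) * (1 - c ^+ 2) * ((1 - c ^+ 2) * d ^+ 2)
              <= K ^+ 2 * ((1 - c ^+ 2) * d ^+ 2).
      by apply: ler_wpM2r => //; apply: mulr_ge0; [lra | apply: sqr_ge0].
    rewrite /Y; set L := (X in X <= _).
    have -> : L = c ^+ 2 * s ^+ 2 * (c ^+ 2 * z ^+ 2) +
        (1 - s ^+ 2) * (1 - c ^+ 2) * ((1 - c ^+ 2) * d ^+ 2) by rewrite /L; ring.
    lra.
  have h2 : Y * Y <= K ^+ 2 * Y by rewrite -expr2; exact: le_trans h hW.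
  have [Y0|Y0] := lerP Y 0.
    have -> : Y = 0 by apply/eqP; rewrite eq_le Y0 hY0.
    exact: sqr_ge0.
  by rewrite -(ler_pM2r Y0).
set H := Num.sqrt ((1 + z) ^+ 2 * c ^+ 2 + d ^+ 2 * (1 - c ^+ 2)).
have hL : 2 * (M * b + N * b') - (M + N) <= H.
  have := SB (1 + z) d.
  suff -> : (1 + z) * (b + b' - 1) + d * (b - b') = 2 * (M * b + N * b') - (M + N) by [].
  rewrite /z /d; ring.
have hH0 : 0 <= H by exact: sqrtr_ge0.
have hH2 : H ^+ 2 = c ^+ 2 + 2 * c ^+ 2 * z + Y.
  rewrite sqr_sqrtr; first by rewrite /Y; ring.
  by apply: addr_ge0; apply: mulr_ge0; rewrite ?sqr_ge0 //; lra.
have hTH : T * H <= T ^+ 2 + c ^+ 2 * z.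
  have hcz : - c ^+ 2 <= c ^+ 2 * z.
    have hz' : - 1 <= z by nra.
    have := ler_wpM2l (sqr_ge0 c) hz'; lra.
  have h0 : 0 <= T ^+ 2 + c ^+ 2 * z by nra.
  rewrite -ler_sqr ?nnegrE //; last by rewrite mulr_ge0 // ltW.
  rewrite exprMn hH2; nra.
apply: le_trans hTH; rewrite ler_pM2l //.
Qed.


Lemma aggregate (n : nat) (P M N b b' : 'I_n -> R) (s c K T0 : R) :
  (forall k, 0 <= P k) -> \sum_k P k = 1 -> \sum_k P k * (M k + N k) = 1 ->
  (forall k al be, al * (M k + N k - 1) + be * (M k - N k) <=
                  Num.sqrt (al ^+ 2 * s ^+ 2 + be ^+ 2 * (1 - s ^+ 2))) ->
  (forall k al be, al * (b k + b' k - 1) + be * (b k - b' k) <=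
                  Num.sqrt (al ^+ 2 * c ^+ 2 + be ^+ 2 * (1 - c ^+ 2))) ->
  s ^+ 2 <= 1 -> c ^+ 2 <= 1 ->
  c ^+ 2 * s ^+ 2 <= K ^+ 2 -> (1 - s ^+ 2) * (1 - c ^+ 2) <= K ^+ 2 ->
  0 <= T0 -> T0 ^+ 2 = c ^+ 2 + K ^+ 2 ->
  \sum_k P k * (M k * b k + N k * b' k) <= 2^-1 * (1 + T0).
Proof.
move=> P0 P1 PMN SA SB hs hc hK1 hK2 hT0 hT0E.
apply/ler_addgt0Pr => e he.
set T := T0 + 2 * e.
have hT : 0 < T by rewrite /T; lra.
have hT2 : c ^+ 2 + K ^+ 2 <= T ^+ 2.
  rewrite -hT0E /T; nra.
have H : \sum_k P k * (T * (2 * (M k * b k + N k * b' k) - (M k + N k)))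
    <= \sum_k P k * (T ^+ 2 + c ^+ 2 * (M k + N k - 1)).
  apply: ler_sum => k _; apply: ler_wpM2l => //.
  exact: perk (SA k) (SB k) hs hc hK1 hK2 hT hT2.
set L := \sum_k P k * (M k * b k + N k * b' k).
have E1 : \sum_k P k * (T * (2 * (M k * b k + N k * b' k) - (M k + N k)))
    = T * (2 * L - \sum_k P k * (M k + N k)).
  rewrite /L mulrBr mulrA !mulr_sumr -sumrB; apply: eq_bigr => k _; ring.
have E2 : \sum_k P k * (T ^+ 2 + c ^+ 2 * (M k + N k - 1))
    = T ^+ 2 * \sum_k P k + c ^+ 2 * (\sum_k P k * (M k + N k) - \sum_k P k).
  rewrite (eq_bigr (fun k => T ^+ 2 * P k + (c ^+ 2 * (P k * (M k + N k)) - c ^+ 2 * P k))); last by move=> k _; ring.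
  by rewrite big_split sumrB /= -!mulr_sumr mulrBr.
rewrite E1 E2 PMN P1 subrr mulr0 addr0 mulr1 in H.
have : 2 * L - 1 <= T.
  by rewrite -(ler_pM2l hT) -expr2.
rewrite /T; lra.
Qed.

Lemma cs3 (a1 a2 a3 b1 b2 b3 : R) :
  (a1 * b1 + a2 * b2 + a3 * b3) ^+ 2 <=
  (a1 ^+ 2 + a2 ^+ 2 + a3 ^+ 2) * (b1 ^+ 2 + b2 ^+ 2 + b3 ^+ 2).
Proof.
rewrite -subr_ge0.
have -> : (a1 ^+ 2 + a2 ^+ 2 + a3 ^+ 2) * (b1 ^+ 2 + b2 ^+ 2 + b3 ^+ 2) -
   (a1 * b1 + a2 * b2 + a3 * b3) ^+ 2 =
   (a1 * b2 - a2 * b1) ^+ 2 + (a1 * b3 - a3 * b1) ^+ 2 + (a2 * b3 - a3 * b2) ^+ 2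
  by ring.
by rewrite !addr_ge0 ?sqr_ge0.
Qed.

Lemma support_real (x0 x1 w z : R) (ur0 ui0 ur1 ui1 vr0 vi0 vr1 vi1 : R)
  (M N S : R) :
  x0 + x1 = 1 -> w ^+ 2 + z ^+ 2 <= x0 * x1 ->
  ur0 ^+ 2 + ui0 ^+ 2 + ur1 ^+ 2 + ui1 ^+ 2 = 1 ->
  vr0 ^+ 2 + vi0 ^+ 2 + vr1 ^+ 2 + vi1 ^+ 2 = 1 ->
  M = x0 * (ur0 ^+ 2 + ui0 ^+ 2) + x1 * (ur1 ^+ 2 + ui1 ^+ 2)
      + 2 * (w * (ur0 * ur1 + ui0 * ui1) - z * (ur0 * ui1 - ui0 * ur1)) ->
  N = x0 * (vr0 ^+ 2 + vi0 ^+ 2) + x1 * (vr1 ^+ 2 + vi1 ^+ 2)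
      + 2 * (w * (vr0 * vr1 + vi0 * vi1) - z * (vr0 * vi1 - vi0 * vr1)) ->
  S = (ur0 * vr0 + ui0 * vi0 + ur1 * vr1 + ui1 * vi1) ^+ 2
      + (ur0 * vi0 - ui0 * vr0 + ur1 * vi1 - ui1 * vr1) ^+ 2 ->
  S <= 1 /\ forall al be, al * (M + N - 1) + be * (M - N) <=
                  Num.sqrt (al ^+ 2 * S + be ^+ 2 * (1 - S)).
Proof.
move=> hx hdet hu hv hM hN hS.
pose p1 := 2 * (ur0 * ur1 + ui0 * ui1); pose p2 := 2 * (ur0 * ui1 - ui0 * ur1).
pose p3 := ur0 ^+ 2 + ui0 ^+ 2 - ur1 ^+ 2 - ui1 ^+ 2.
pose q1 := 2 * (vr0 * vr1 + vi0 * vi1); pose q2 := 2 * (vr0 * vi1 - vi0 * vr1).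
pose q3 := vr0 ^+ 2 + vi0 ^+ 2 - vr1 ^+ 2 - vi1 ^+ 2.
pose r1 := 2 * w; pose r2 := - 2 * z; pose r3 := x0 - x1.
have hp : p1 ^+ 2 + p2 ^+ 2 + p3 ^+ 2 = 1.
  have -> : p1 ^+ 2 + p2 ^+ 2 + p3 ^+ 2 =
     (ur0 ^+ 2 + ui0 ^+ 2 + ur1 ^+ 2 + ui1 ^+ 2) ^+ 2 by rewrite /p1 /p2 /p3; ring.
  by rewrite hu expr1n.
have hq : q1 ^+ 2 + q2 ^+ 2 + q3 ^+ 2 = 1.
  have -> : q1 ^+ 2 + q2 ^+ 2 + q3 ^+ 2 =
     (vr0 ^+ 2 + vi0 ^+ 2 + vr1 ^+ 2 + vi1 ^+ 2) ^+ 2 by rewrite /q1 /q2 /q3; ring.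
  by rewrite hv expr1n.
have hM2 : 2 * M = 1 + (r1 * p1 + r2 * p2 + r3 * p3).
  have -> : 2 * M = (x0 + x1) * (ur0 ^+ 2 + ui0 ^+ 2 + ur1 ^+ 2 + ui1 ^+ 2)
     + (r1 * p1 + r2 * p2 + r3 * p3) by rewrite hM /r1 /r2 /r3 /p1 /p2 /p3; ring.
  by rewrite hx hu mul1r.
have hN2 : 2 * N = 1 + (r1 * q1 + r2 * q2 + r3 * q3).
  have -> : 2 * N = (x0 + x1) * (vr0 ^+ 2 + vi0 ^+ 2 + vr1 ^+ 2 + vi1 ^+ 2)
     + (r1 * q1 + r2 * q2 + r3 * q3) by rewrite hN /r1 /r2 /r3 /q1 /q2 /q3; ring.
  by rewrite hx hv mul1r.
have hS2 : 2 * S = 1 + (p1 * q1 + p2 * q2 + p3 * q3).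
  have -> : 2 * S = (ur0 ^+ 2 + ui0 ^+ 2 + ur1 ^+ 2 + ui1 ^+ 2) *
       (vr0 ^+ 2 + vi0 ^+ 2 + vr1 ^+ 2 + vi1 ^+ 2) + (p1 * q1 + p2 * q2 + p3 * q3)
    by rewrite hS /p1 /p2 /p3 /q1 /q2 /q3; ring.
  by rewrite hu hv mul1r.
have hr : r1 ^+ 2 + r2 ^+ 2 + r3 ^+ 2 <= 1.
  have -> : r1 ^+ 2 + r2 ^+ 2 + r3 ^+ 2 = (x0 + x1) ^+ 2 - 4 * (x0 * x1 - (w ^+ 2 + z ^+ 2))
    by rewrite /r1 /r2 /r3; ring.
  rewrite hx expr1n; lra.
split.
  have := cs3 p1 p2 p3 q1 q2 q3; rewrite hp hq mul1r => h.
  have : p1 * q1 + p2 * q2 + p3 * q3 <= 1 by nra.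
  lra.
move=> al be.
pose w1 := al * (p1 + q1) + be * (p1 - q1).
pose w2 := al * (p2 + q2) + be * (p2 - q2).
pose w3 := al * (p3 + q3) + be * (p3 - q3).
have hL : al * (M + N - 1) + be * (M - N) = (r1 * w1 + r2 * w2 + r3 * w3) / 2.
  have hL2 : 2 * (al * (M + N - 1) + be * (M - N)) = r1 * w1 + r2 * w2 + r3 * w3.
    have -> : 2 * (al * (M + N - 1) + be * (M - N)) =
       al * (2 * M + 2 * N - 2) + be * (2 * M - 2 * N) by ring.
    rewrite hM2 hN2 /w1 /w2 /w3; ring.
  by rewrite -hL2; field.
have hw : w1 ^+ 2 + w2 ^+ 2 + w3 ^+ 2 = 4 * (al ^+ 2 * S + be ^+ 2 * (1 - S)).
  have -> : w1 ^+ 2 + w2 ^+ 2 + w3 ^+ 2 =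
     al ^+ 2 * ((p1 ^+ 2 + p2 ^+ 2 + p3 ^+ 2) + (q1 ^+ 2 + q2 ^+ 2 + q3 ^+ 2)
                 + 2 * (p1 * q1 + p2 * q2 + p3 * q3))
   + be ^+ 2 * ((p1 ^+ 2 + p2 ^+ 2 + p3 ^+ 2) + (q1 ^+ 2 + q2 ^+ 2 + q3 ^+ 2)
                 - 2 * (p1 * q1 + p2 * q2 + p3 * q3))
   + 2 * al * be * ((p1 ^+ 2 + p2 ^+ 2 + p3 ^+ 2) - (q1 ^+ 2 + q2 ^+ 2 + q3 ^+ 2))
    by rewrite /w1 /w2 /w3; ring.
  rewrite hp hq.
  have -> : p1 * q1 + p2 * q2 + p3 * q3 = 2 * S - 1 by rewrite hS2; ring.
  ring.
rewrite hL; apply: sq_le_sqrt.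
have := cs3 r1 r2 r3 w1 w2 w3; rewrite hw => h.
have h0 : 0 <= al ^+ 2 * S + be ^+ 2 * (1 - S).
  have : 0 <= w1 ^+ 2 + w2 ^+ 2 + w3 ^+ 2 by rewrite !addr_ge0 ?sqr_ge0.
  rewrite hw; lra.
have h1 : (r1 * w1 + r2 * w2 + r3 * w3) ^+ 2 <= 4 * (al ^+ 2 * S + be ^+ 2 * (1 - S)).
  apply: le_trans h _.
  have := ler_wpM2r h0 hr; rewrite mul1r; lra.
rewrite expr_div_n; rewrite ler_pdivrMr; last by rewrite exprn_gt0 // ltr0n.
lra.
Qed.

End RealPart.

Section CPart.
Variable R : realType.
Local Notation C := (R[i]).

Lemma sum2 (F : 'I_2 -> C) : \sum_i F i = F 0 + F 1.
Proof. by rewrite big_ord_recl big_ord1; congr (F _ + F _); apply: val_inj. Qed.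

Lemma expectE n (u : 'cV[C]_n) (A : 'M[C]_n) :
  expect u A = \sum_i \sum_j Num.conj (u i 0) * A i j * u j 0.
Proof.
rewrite /expect mxE exchange_big /=; apply: eq_bigr => j _.
rewrite mxE mulr_suml; apply: eq_bigr => i _.
by rewrite /adjmx !mxE.
Qed.

Lemma expect2 (u : 'cV[C]_2) (A : 'M[C]_2) :
  expect u A = Num.conj (u 0 0) * (A 0 0 * u 0 0 + A 0 1 * u 1 0)
             + Num.conj (u 1 0) * (A 1 0 * u 0 0 + A 1 1 * u 1 0).
Proof. by rewrite expectE !sum2 !mulrDr !mulrA. Qed.

Lemma braketE n (u v : 'cV[C]_n) : braket u v = \sum_i Num.conj (u i 0) * v i 0.
Proof. by rewrite /braket mxE; apply: eq_bigr => i _; rewrite /adjmx !mxE. Qed.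

Lemma braket2 (u v : 'cV[C]_2) :
  braket u v = Num.conj (u 0 0) * v 0 0 + Num.conj (u 1 0) * v 1 0.
Proof. by rewrite braketE sum2. Qed.

Definition vec2 (x y : C) : 'cV[C]_2 := \matrix_(i, j) (if i == 0 then x else y).

Lemma vec2_0 x y : vec2 x y 0 0 = x. Proof. by rewrite mxE. Qed.
Lemma vec2_1 x y : vec2 x y 1 0 = y. Proof. by rewrite mxE. Qed.


Lemma ReM (x y : C) : cRe (x * y) = cRe x * cRe y - cIm x * cIm y.
Proof. by case: x => a b; case: y => c d. Qed.
Lemma ImM (x y : C) : cIm (x * y) = cRe x * cIm y + cIm x * cRe y.
Proof. case: x => a b; case: y => c d /=. ring. Qed.
Lemma ReJ (x : C) : cRe (Num.conj x) = cRe x.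
Proof. by case: x. Qed.
Lemma ImJ (x : C) : cIm (Num.conj x) = - cIm x.
Proof. by case: x. Qed.
Lemma ReD (x y : C) : cRe (x + y) = cRe x + cRe y.
Proof. by case: x => a b; case: y => c d. Qed.
Lemma ImD (x y : C) : cIm (x + y) = cIm x + cIm y.
Proof. by case: x => a b; case: y => c d. Qed.

Lemma ReN (x : C) : cRe (- x) = - cRe x. Proof. by case: x. Qed.
Lemma ImN (x : C) : cIm (- x) = - cIm x. Proof. by case: x. Qed.
Lemma Re1 : cRe (1 : C) = 1. Proof. by []. Qed.
Lemma Im1 : cIm (1 : C) = 0. Proof. by []. Qed.
Lemma Re0 : cRe (0 : C) = 0. Proof. by []. Qed.
Lemma Im0 : cIm (0 : C) = 0. Proof. by []. Qed.

Lemma ge0P {x : C} : 0 <= x -> cIm x = 0 /\ 0 <= cRe x.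
Proof. by rewrite lecE => /andP [/eqP h hr]; split. Qed.


Definition qre (a b c d x y : C) : R :=
  cRe x * (cRe a * cRe x - cIm a * cIm x + (cRe b * cRe y - cIm b * cIm y))
  + cIm x * (cRe a * cIm x + cIm a * cRe x + (cRe b * cIm y + cIm b * cRe y))
  + cRe y * (cRe c * cRe x - cIm c * cIm x + (cRe d * cRe y - cIm d * cIm y))
  + cIm y * (cRe c * cIm x + cIm c * cRe x + (cRe d * cIm y + cIm d * cRe y)).
Definition qim (a b c d x y : C) : R :=
  cRe x * (cRe a * cIm x + cIm a * cRe x + (cRe b * cIm y + cIm b * cRe y))
  - cIm x * (cRe a * cRe x - cIm a * cIm x + (cRe b * cRe y - cIm b * cIm y))
  + cRe y * (cRe c * cIm x + cIm c * cRe x + (cRe d * cIm y + cIm d * cRe y))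
  - cIm y * (cRe c * cRe x - cIm c * cIm x + (cRe d * cRe y - cIm d * cIm y)).
Definition bre (x0 x1 y0 y1 : C) : R :=
  cRe x0 * cRe y0 + cIm x0 * cIm y0 + cRe x1 * cRe y1 + cIm x1 * cIm y1.
Definition bim (x0 x1 y0 y1 : C) : R :=
  cRe x0 * cIm y0 - cIm x0 * cRe y0 + cRe x1 * cIm y1 - cIm x1 * cRe y1.

Lemma ReQ (a b c d x y : C) :
  cRe (Num.conj x * (a * x + b * y) + Num.conj y * (c * x + d * y)) = qre a b c d x y.
Proof. rewrite /qre !(ReM, ImM, ReD, ImD, ReJ, ImJ); ring. Qed.
Lemma ImQ (a b c d x y : C) :
  cIm (Num.conj x * (a * x + b * y) + Num.conj y * (c * x + d * y)) = qim a b c d x y.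
Proof. rewrite /qim !(ReM, ImM, ReD, ImD, ReJ, ImJ); ring. Qed.
Lemma ReB (x0 x1 y0 y1 : C) :
  cRe (Num.conj x0 * y0 + Num.conj x1 * y1) = bre x0 x1 y0 y1.
Proof. rewrite /bre !(ReM, ImM, ReD, ImD, ReJ, ImJ); ring. Qed.
Lemma ImB (x0 x1 y0 y1 : C) :
  cIm (Num.conj x0 * y0 + Num.conj x1 * y1) = bim x0 x1 y0 y1.
Proof. rewrite /bim !(ReM, ImM, ReD, ImD, ReJ, ImJ); ring. Qed.

Lemma support_cc (a00 a01 a10 a11 u0 u1 v0 v1 : C) :
  (forall x y : C, 0 <= Num.conj x * (a00 * x + a01 * y) + Num.conj y * (a10 * x + a11 * y)) ->
  a00 + a11 = 1 ->
  Num.conj u0 * u0 + Num.conj u1 * u1 = 1 ->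
  Num.conj v0 * v0 + Num.conj v1 * v1 = 1 ->
  let m := cRe (Num.conj u0 * (a00 * u0 + a01 * u1) + Num.conj u1 * (a10 * u0 + a11 * u1)) in
  let n := cRe (Num.conj v0 * (a00 * v0 + a01 * v1) + Num.conj v1 * (a10 * v0 + a11 * v1)) in
  let S := cRe (Num.conj u0 * v0 + Num.conj u1 * v1) ^+ 2
         + cIm (Num.conj u0 * v0 + Num.conj u1 * v1) ^+ 2 in
  S <= 1 /\ forall al be, al * (m + n - 1) + be * (m - n) <=
                  Num.sqrt (al ^+ 2 * S + be ^+ 2 * (1 - S)).
Proof.
move=> hpsd htr hu hv m n S.
have [j [hjr hji]] : exists j : C, cRe j = 0 /\ cIm j = 1 by exists (Complex 0 1).
have [o [hor hoi]] : exists o : C, cRe o = 0 /\ cIm o = 0 by exists 0.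
have [l [hlr hli]] : exists l : C, cRe l = 1 /\ cIm l = 0 by exists 1.
have [w1 [hw1r hw1i]] : exists w : C, cRe w = - cRe a01 /\ cIm w = - cIm a01.
  by exists (- a01); rewrite ReN ImN.
have [w2 [hw2r hw2i]] : exists w : C, cRe w = - cRe a10 /\ cIm w = - cIm a10.
  by exists (- a10); rewrite ReN ImN.
have [i1 r1] := ge0P (hpsd l o).
have [i2 r2] := ge0P (hpsd o l).
have [i3 r3] := ge0P (hpsd l l).
have [i4 r4] := ge0P (hpsd l j).
have [i5 r5] := ge0P (hpsd w1 a00).
have [i6 r6] := ge0P (hpsd a11 w2).
have htrR : cRe a00 + cRe a11 = 1 by rewrite -ReD htr.
have huR : bre u0 u1 u0 u1 = 1 by rewrite -ReB hu.
have hvR : bre v0 v1 v0 v1 = 1 by rewrite -ReB hv.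
move: i1 r1 i2 r2 i3 r3 i4 r4 i5 r5 i6 r6 huR hvR.
rewrite /m /n /S; clear m n S hpsd htr hu hv.
rewrite !ImQ !ReQ ReB ImB.
rewrite /qre /qim /bre /bim ?hjr ?hji ?hor ?hoi ?hlr ?hli ?hw1r ?hw1i ?hw2r ?hw2i.
move: htrR.
move: (cRe a00) (cIm a00) (cRe a01) (cIm a01) (cRe a10) (cIm a10) (cRe a11) (cIm a11)
  (cRe u0) (cIm u0) (cRe u1) (cIm u1) (cRe v0) (cIm v0) (cRe v1) (cIm v1).
move=> x00 y00 x01 y01 x10 y10 x11 y11 ur0 ui0 ur1 ui1 vr0 vi0 vr1 vi1.
move=> htrR i1 r1 i2 r2 i3 r3 i4 r4 i5 r5 i6 r6 huR hvR.
have ey00 : y00 = 0 by lra.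
have ey11 : y11 = 0 by lra.
subst y00 y11.
have ey10 : y10 = - y01 by lra.
have ex10 : x10 = x01 by lra.
subst y10 x10.
have ex11 : x11 = 1 - x00 by lra.
subst x11.
have hdet : x01 ^+ 2 + y01 ^+ 2 <= x00 * (1 - x00) by nra.
have hu' : ur0 ^+ 2 + ui0 ^+ 2 + ur1 ^+ 2 + ui1 ^+ 2 = 1 by nra.
have hv' : vr0 ^+ 2 + vi0 ^+ 2 + vr1 ^+ 2 + vi1 ^+ 2 = 1 by nra.
apply: (@support_real R x00 (1 - x00) x01 y01 ur0 ui0 ur1 ui1 vr0 vi0 vr1 vi1
   _ _ _ _ hdet hu' hv'); ring.
Qed.

Lemma support_m (A : 'M[C]_2) (u v : 'cV[C]_2) :
  density A -> unit_vec u -> unit_vec v ->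
  let S := cRe (braket u v) ^+ 2 + cIm (braket u v) ^+ 2 in
  S <= 1 /\ forall al be,
    al * (cRe (expect u A) + cRe (expect v A) - 1) +
    be * (cRe (expect u A) - cRe (expect v A)) <=
    Num.sqrt (al ^+ 2 * S + be ^+ 2 * (1 - S)).
Proof.
move=> [hpsd htr] hu hv S.
rewrite /S !expect2 braket2.
apply: support_cc.
- by move=> x y; have := hpsd (vec2 x y); rewrite expect2 !vec2_0 !vec2_1.
- by move: htr; rewrite /mxtrace sum2.
- by move: hu; rewrite /unit_vec braket2.
- by move: hv; rewrite /unit_vec braket2.
Qed.

Lemma expectZ n (u : 'cV[C]_n) a X : expect u (a *: X) = a * expect u X.
Proof.
rewrite !expectE mulr_sumr; apply: eq_bigr => i _; rewrite mulr_sumr.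
by apply: eq_bigr => j _; rewrite mxE; ring.
Qed.

Lemma expectD n (u : 'cV[C]_n) X Y : expect u (X + Y) = expect u X + expect u Y.
Proof.
rewrite !expectE -big_split; apply: eq_bigr => i _; rewrite -big_split.
by apply: eq_bigr => j _; rewrite mxE /=; ring.
Qed.

Lemma expect0 n (u : 'cV[C]_n) : expect u 0 = 0.
Proof. by rewrite expectE big1 // => i _; rewrite big1 // => j _; rewrite mxE mulr0 mul0r. Qed.

Lemma expect_sum n (u : 'cV[C]_n) (I : finType) (F : I -> 'M[C]_n) :
  expect u (\sum_i F i) = \sum_i expect u (F i).
Proof. by apply: (big_morph (expect u)); [exact: expectD | exact: expect0]. Qed.

Definition omega : 'cV[C]_(2 * 2) :=
  \matrix_(i, j) (((mxtens_unindex i).1 == (mxtens_unindex i).2)%:R).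
Definition rho : 'M[C]_(2 * 2) := 2^-1 *: ketbra omega.

Lemma braketC n (u v : 'cV[C]_n) : braket u v = Num.conj (braket v u).
Proof.
rewrite !braketE rmorph_sum; apply: eq_bigr => i _.
by rewrite rmorphM /= conjCK mulrC.
Qed.

Lemma expect_ketbra n (v w : 'cV[C]_n) :
  expect v (ketbra w) = Num.conj (braket w v) * braket w v.
Proof.
rewrite /expect /ketbra !mulmxA -(mulmxA (adjmx v *m w)) mxE big_ord1.
by rewrite -braketC.
Qed.

Lemma braket_omega : braket omega omega = 2.
Proof.
rewrite braketE !big_ord_recr big_ord0 /= !mxE /=.
rewrite !(rmorph0, rmorph1) !mul0r !mulr1 !addr0 add0r.
by rewrite -[2]/(1 + 1).
Qed.

Lemma rho_density : density rho.
Proof.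
split.
  move=> v; rewrite /rho expectZ expect_ketbra.
  by apply: mulr_ge0; [rewrite invr_ge0 ler0n | rewrite mulrC mul_conjC_ge0].
rewrite /rho mxtraceZ /ketbra mxtrace_mulC trace_mx11.
by rewrite -[X in _ * X = _]/(braket omega omega) braket_omega mulVf // pnatr_eq0.
Qed.

Lemma block_rho (a a' : 'I_2) : block rho a a' = 2^-1 *: delta_mx a a'.
Proof.
apply/matrixP => b b'; rewrite /block /rho !mxE big_ord1 /adjmx !mxE !mxtens_indexK /=.
rewrite (eq_sym b a) (eq_sym b' a').
by case: (a == b); case: (a' == b'); rewrite /= ?(rmorph0, rmorph1, mulr0, mulr1, mul0r).
Qed.

Section Lin.
Variable Psi : 'M[C]_2 -> 'M[C]_2.
Hypothesis hlin : is_linear_map Psi.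

Lemma Psi0 : Psi 0 = 0.
Proof.
have := hlin 1 0 0; rewrite !scale1r addr0 => h.
by apply: (addrI (Psi 0)); rewrite addr0 -h.
Qed.

Lemma PsiD X Y : Psi (X + Y) = Psi X + Psi Y.
Proof. by have := hlin 1 X Y; rewrite !scale1r. Qed.

Lemma PsiZ a X : Psi (a *: X) = a *: Psi X.
Proof. by have := hlin a X 0; rewrite !addr0 Psi0 addr0. Qed.

Lemma Psi_sum (I : finType) (F : I -> 'M[C]_2) : Psi (\sum_i F i) = \sum_i Psi (F i).
Proof. by apply: (big_morph Psi); [exact: PsiD | exact: Psi0]. Qed.

Lemma keyF N (p : 'I_N -> C) (A B : 'I_N -> 'M[C]_2) :
  id_tens Psi rho = \sum_k p k *: (A k *t B k) ->
  forall a a', Psi (delta_mx a a') = \sum_k (2 * (p k * A k a a')) *: B k.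
Proof.
move=> hsep a a'; apply/matrixP => b b'.
have := congr1 (fun X : 'M[C]_(2 * 2) => X (mxtens_index (a, b)) (mxtens_index (a', b'))) hsep => /=.
rewrite /id_tens mxE !mxtens_indexK /= block_rho PsiZ summxE mxE => h.
rewrite summxE.
have -> : Psi (delta_mx a a') b b' = 2 * (2^-1 * Psi (delta_mx a a') b b').
  by rewrite mulrA divff ?mul1r // pnatr_eq0.
rewrite h mulr_sumr; apply: eq_bigr => k _.
by rewrite !mxE !mxtens_indexK /=; ring.
Qed.

Lemma ketbraE (psi : 'cV[C]_2) a a' : ketbra psi a a' = psi a 0 * Num.conj (psi a' 0).
Proof. by rewrite /ketbra mxE big_ord1 /adjmx !mxE. Qed.

Lemma expect_Psi N (p : 'I_N -> C) (A B : 'I_N -> 'M[C]_2) (psi e : 'cV[C]_2) :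
  (forall a a', Psi (delta_mx a a') = \sum_k (2 * (p k * A k a a')) *: B k) ->
  expect e (Psi (ketbra psi)) =
  \sum_k 2 * p k * expect (map_mx Num.conj psi) (A k) * expect e (B k).
Proof.
move=> hF.
rewrite {1}[ketbra psi]matrix_sum_delta Psi_sum expect_sum.
under eq_bigr do rewrite Psi_sum expect_sum.
under eq_bigr do under eq_bigr do rewrite PsiZ expectZ hF expect_sum mulr_sumr.
under eq_bigr do rewrite exchange_big /=.
rewrite exchange_big /=.
apply: eq_bigr => k _.
rewrite expectE mulr_sumr mulr_suml; apply: eq_bigr => a _.
rewrite mulr_sumr mulr_suml; apply: eq_bigr => a' _.
by rewrite expectZ ketbraE !mxE conjCK; ring.
Qed.

Lemma TP N (p : 'I_N -> C) (A B : 'I_N -> 'M[C]_2) :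
  trace_preserving Psi -> (forall k, density (B k)) ->
  (forall a a', Psi (delta_mx a a') = \sum_k (2 * (p k * A k a a')) *: B k) ->
  forall a a', \sum_k 2 * (p k * A k a a') = \tr (delta_mx a a' : 'M[C]_2).
Proof.
move=> htp hB hF a a'; rewrite -htp hF /mxtrace.
rewrite (eq_bigr (fun i => \sum_k (2 * (p k * A k a a')) * B k i i)); last first.
  by move=> i _; rewrite summxE; apply: eq_bigr => k _; rewrite mxE.
rewrite exchange_big /=; apply: eq_bigr => k _.
by rewrite -mulr_sumr; have := (hB k).2; rewrite /mxtrace => ->; rewrite mulr1.
Qed.

End Lin.

Lemma sum_pm N (p : 'I_N -> C) (A : 'I_N -> 'M[C]_2) (psi : 'cV[C]_2) :
  (forall a a', \sum_k 2 * (p k * A k a a') = \tr (delta_mx a a' : 'M[C]_2)) ->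
  \sum_k 2 * p k * expect (map_mx Num.conj psi) (A k) = braket psi psi.
Proof.
move=> hT.
rewrite (eq_bigr (fun k => \sum_a \sum_a' psi a 0 * Num.conj (psi a' 0) * (2 * (p k * A k a a')))); last first.
  move=> k _; rewrite expectE mulr_sumr; apply: eq_bigr => a _.
  rewrite mulr_sumr; apply: eq_bigr => a' _; rewrite !mxE conjCK; ring.
rewrite exchange_big /=; under eq_bigr do rewrite exchange_big /=.
under eq_bigr do under eq_bigr do rewrite -mulr_sumr hT.
rewrite braket2 !sum2 /mxtrace !sum2 !mxE /=; ring.
Qed.


Lemma braket_conj n (u v : 'cV[C]_n) :
  braket (map_mx Num.conj u) (map_mx Num.conj v) = Num.conj (braket u v).
Proof.
rewrite !braketE rmorph_sum; apply: eq_bigr => i _.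
by rewrite !mxE rmorphM.
Qed.

Lemma unit_conj n (u : 'cV[C]_n) : unit_vec u -> unit_vec (map_mx Num.conj u).
Proof. by rewrite /unit_vec braket_conj => ->; rewrite rmorph1. Qed.

Lemma density_ketbra n (u : 'cV[C]_n) : unit_vec u -> density (ketbra u).
Proof.
move=> hu; split.
  by move=> v; rewrite expect_ketbra mulrC mul_conjC_ge0.
by rewrite /ketbra mxtrace_mulC trace_mx11.
Qed.

Lemma RRe_ge0 (x : C) : 0 <= x -> (cRe x)%:C%C = x.
Proof. by move/ger0_real/RRe_real. Qed.

Lemma maxC (x y : R) : Num.max x%:C%C y%:C%C = (Num.max x y)%:C%C.
Proof. by rewrite /Num.max /Order.max ltcR; case: (x < y). Qed.

Lemma normRe (z : C) : cRe `|z| = Num.sqrt (cRe z ^+ 2 + cIm z ^+ 2).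
Proof. by rewrite normc_def. Qed.

End CPart.



Arguments support_m {R A u v}.
Arguments unit_conj {R n u}.
Arguments density_ketbra {R n u}.
Arguments aggregate {R n P M N b b' s c K T0}.
Arguments RRe_ge0 {R x}.

Theorem corollary4 (R : realType) (psi phi e f : 'cV[R[i]]_2) :
  unit_vec psi -> unit_vec phi -> unit_vec e -> unit_vec f ->
  forall Psi : 'M[R[i]]_2 -> 'M[R[i]]_2, entanglement_breaking Psi ->
  2^-1 * expect e (Psi (ketbra psi)) + 2^-1 * expect f (Psi (ketbra phi))
  <= 2^-1 * (1 + sqrtC (`|braket e f| ^+ 2 +
        Num.max (`|braket psi phi| * `|braket e f|)
                (sqrtC ((1 - `|braket psi phi| ^+ 2) * (1 - `|braket e f| ^+ 2)))
          ^+ 2)).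
Proof.
move=> hpsi hphi he hf Psi [[hlin hcp htp] heb].
have [N [p [A [B [hp0 hp1 hA hB hsep]]]]] := heb _ (rho_density R).
have hF := @keyF R Psi hlin N p A B hsep.
have hT := @TP R Psi N p A B htp hB hF.
rewrite !(@expect_Psi R Psi hlin N p A B _ _ hF).
have hm := @sum_pm R N p A psi hT; have hn := @sum_pm R N p A phi hT.
rewrite hpsi in hm; rewrite hphi in hn.
pose P k := cRe (p k).
pose M k := cRe (expect (map_mx Num.conj psi) (A k)).
pose Nn k := cRe (expect (map_mx Num.conj phi) (A k)).
pose b k := cRe (expect e (B k)).
pose b' k := cRe (expect f (B k)).
have hPC k : (P k)%:C%C = p k by apply: RRe_ge0.
have hMC k : (M k)%:C%C = expect (map_mx Num.conj psi) (A k) by apply: RRe_ge0; apply: (hA k).1.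
have hNC k : (Nn k)%:C%C = expect (map_mx Num.conj phi) (A k) by apply: RRe_ge0; apply: (hA k).1.
have hbC k : (b k)%:C%C = expect e (B k) by apply: RRe_ge0; apply: (hB k).1.
have hb'C k : (b' k)%:C%C = expect f (B k) by apply: RRe_ge0; apply: (hB k).1.
have -> : 2^-1 * (\sum_k 2 * p k * expect (map_mx Num.conj psi) (A k) * expect e (B k))
   + 2^-1 * (\sum_k 2 * p k * expect (map_mx Num.conj phi) (A k) * expect f (B k))
   = (\sum_k P k * (M k * b k + Nn k * b' k))%:C%C.
  rewrite rmorph_sum !mulr_sumr -big_split; apply: eq_bigr => k _.
  by rewrite rmorphM rmorphD !rmorphM /= hPC hMC hNC hbC hb'C; field.
have hP0 k : 0 <= P k by rewrite -ler0c hPC.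
have hP1 : \sum_k P k = 1.
  by apply: complexI; rewrite rmorph_sum /=; under eq_bigr do rewrite hPC; rewrite hp1.
have hPMN : \sum_k P k * (M k + Nn k) = 1.
  apply: complexI; rewrite rmorph_sum /=.
  under eq_bigr do rewrite rmorphM rmorphD /= hPC hMC hNC.
  have -> : \sum_k p k * (expect (map_mx Num.conj psi) (A k) + expect (map_mx Num.conj phi) (A k))
     = 2^-1 * (\sum_k 2 * p k * expect (map_mx Num.conj psi) (A k))
     + 2^-1 * (\sum_k 2 * p k * expect (map_mx Num.conj phi) (A k)).
    by rewrite !mulr_sumr -big_split; apply: eq_bigr => k _ /=; field.
  by rewrite hm hn; field.
set z1 := braket psi phi; set z2 := braket e f.
pose sR := cRe `|z1|; pose cR := cRe `|z2|.
have hsC : `|z1| = sR%:C%C by rewrite RRe_ge0 // normr_ge0.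
have hcC : `|z2| = cR%:C%C by rewrite RRe_ge0 // normr_ge0.
have hs0 : 0 <= sR by rewrite /sR normRe sqrtr_ge0.
have hc0 : 0 <= cR by rewrite /cR normRe sqrtr_ge0.
have hsS : sR ^+ 2 = cRe z1 ^+ 2 + cIm z1 ^+ 2.
  by rewrite /sR normRe sqr_sqrtr // addr_ge0 ?sqr_ge0.
have hcS : cR ^+ 2 = cRe z2 ^+ 2 + cIm z2 ^+ 2.
  by rewrite /cR normRe sqr_sqrtr // addr_ge0 ?sqr_ge0.
have SA k al be : al * (M k + Nn k - 1) + be * (M k - Nn k) <=
    Num.sqrt (al ^+ 2 * sR ^+ 2 + be ^+ 2 * (1 - sR ^+ 2)).
  have [_ h] := support_m (hA k) (unit_conj hpsi) (unit_conj hphi).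
  by move: (h al be); rewrite braket_conj ReJ ImJ sqrrN -/z1 -hsS.
have hs1 : sR ^+ 2 <= 1.
  have [h _] := support_m (density_ketbra hpsi) (unit_conj hpsi) (unit_conj hphi).
  by move: h; rewrite braket_conj ReJ ImJ sqrrN -/z1 -hsS.
have SB k al be : al * (b k + b' k - 1) + be * (b k - b' k) <=
    Num.sqrt (al ^+ 2 * cR ^+ 2 + be ^+ 2 * (1 - cR ^+ 2)).
  have [_ h] := support_m (hB k) he hf.
  by move: (h al be); rewrite -/z2 -hcS.
have hc1 : cR ^+ 2 <= 1.
  have [h _] := support_m (density_ketbra he) he hf.
  by move: h; rewrite -/z2 -hcS.
pose q := (1 - sR ^+ 2) * (1 - cR ^+ 2).
have hq0 : 0 <= q by rewrite /q; apply: mulr_ge0; lra.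
have hin : (1 - `|z1| ^+ 2) * (1 - `|z2| ^+ 2) = q%:C%C.
  by rewrite hsC hcC /q rmorphM /= !rmorphB /= !rmorphXn /= rmorph1.
rewrite hin.
have hQ0 : 0 <= sqrtC q%:C%C by rewrite sqrtC_ge0 ler0c.
pose QR := cRe (sqrtC q%:C%C).
have hQC : QR%:C%C = sqrtC q%:C%C by apply: RRe_ge0.
have hQR0 : 0 <= QR by rewrite -ler0c hQC.
have hQ2 : QR ^+ 2 = q by apply: complexI; rewrite rmorphXn /= hQC sqrtCK.
rewrite -hQC hsC hcC -rmorphM /= maxC.
pose KR := Num.max (sR * cR) QR.
have hK1 : sR * cR <= KR by rewrite /KR le_max lexx.
have hK2 : QR <= KR by rewrite /KR le_max lexx orbT.
rewrite -/KR -!rmorphXn /= -rmorphD /=.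
have hT0 : 0 <= sqrtC (cR ^+ 2 + KR ^+ 2)%:C%C by rewrite sqrtC_ge0 ler0c addr_ge0 ?sqr_ge0.
pose TR := cRe (sqrtC (cR ^+ 2 + KR ^+ 2)%:C%C).
have hTC : TR%:C%C = sqrtC (cR ^+ 2 + KR ^+ 2)%:C%C by apply: RRe_ge0.
have hTR0 : 0 <= TR by rewrite -ler0c hTC.
have hT2 : TR ^+ 2 = cR ^+ 2 + KR ^+ 2 by apply: complexI; rewrite rmorphXn /= hTC sqrtCK.
rewrite -hTC.
have -> : 2^-1 * (1 + TR%:C%C) = (2^-1 * (1 + TR))%:C%C.
  by rewrite rmorphM rmorphD /= fmorphV rmorph_nat rmorph1.
rewrite lecR.
apply: (aggregate hP0 hP1 hPMN SA SB hs1 hc1 _ _ hTR0 hT2).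
- have h0 : 0 <= sR * cR by apply: mulr_ge0.
  nra.
- rewrite -/q -hQ2; nra.
Qed.
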